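(* Let $G$ be a completely multipartite vertex-weighted multigraph such that every vertex $v$ of $G$ satisfies $\mathrm{rdeg}(v)\geq 4$ and $\mathrm{wt}(v)\geq 2$. Then $G$ is admissibly contractible.
   Context: A vertex-weighted multigraph is $G=(V,E,r,\mathrm{wt})$ with $V$ a finite vertex set, $E$ a finite edge set, $r$ assigning to each edge an unordered pair of distinct vertices, $\mathrm{wt}:V\to\mathbb{Z}$. $\deg(v)$ is the number of edges incident to $v$, $\mathrm{rdeg}(v)$ the number of vertices adjacent to $v$. $G$ is completely multipartite if there is no triple of vertices $v_1,v_2,v_3$ with $\{v_1,v_2\}$, $\{v_1,v_3\}$ non-adjacent but $\{v_2,v_3\}$ adjacent. For adjacent $v,w$, the contraction with respect to $\{v,w\}$ identifies $v,w$ to a vertex of weight $\mathrm{wt}(v)+\mathrm{wt}(w)$, deletes edges between $v$ and $w$, keeps other edges and weights. With $m$ the number of edges between $v,w$, the contraction is admissible if, for some labeling of the pair as $v,w$, there is an integer $0\leq l<m$ with: every vertex $x\notin\{v,w\}$ has $\deg(x)\geq 3$; $\mathrm{wt}(v)\geq l+1$, $\mathrm{wt}(w)\geq l+2$; $\deg(v)-m+l\geq 3$ and $\deg(w)-m+l\geq 3$. $G$ is admissibly contractible if a finite sequence of admissible contractions turns it into a single vertex. *)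

(* Defs.v *)
From mathcomp Require Import all_boot all_order all_algebra.
Set Implicit Arguments. Unset Strict Implicit. Unset Printing Implicit Defensive.
Import Order.TTheory GRing.Theory Num.Theory.

(* A vertex-weighted multigraph whose vertices live in an ambient finite type T
   and whose edges live in an ambient finite type U.
   vset = V, eset = E, ends e = r(e) (an unordered pair, i.e. a 2-element set),
   wt = weight function (only its values on vset matter). *)
Record mgraph (T U : finType) := MGraph {
  vset : {set T};
  eset : {set U};
  ends : U -> {set T};
  wt   : T -> int
}.

Section Defs.
Variables (T U : finType).
Implicit Types (G : mgraph T U) (x y v w : T).

Definition wf G : Prop :=
  forall e, e \in eset G -> ends G e \subset vset G /\ #|ends G e| = 2.

Definition mult G x y : nat := #|[set e in eset G | ends G e == [set x; y]]|.

Definition adj G x y : bool :=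
  [&& x \in vset G, y \in vset G, x != y & 0 < mult G x y].

Definition deg G x : nat := #|[set e in eset G | x \in ends G e]|.

Definition rdeg G x : nat := #|[set y in vset G | adj G x y]|.

Definition complete_multipartite G : Prop :=
  forall v1 v2 v3, v1 \in vset G -> v2 \in vset G -> v3 \in vset G ->
    ~ [/\ ~~ adj G v1 v2, ~~ adj G v1 v3 & adj G v2 v3].

(* Contraction w.r.t. {v,w}: w is identified into v (the merged vertex keeps the
   name v and gets weight wt v + wt w); edges between v and w are deleted; the
   other edges are kept, with endpoint w renamed to v. *)
Definition contract G v w : mgraph T U :=
  {| vset := vset G :\ w;
     eset := [set e in eset G | ends G e != [set v; w]];
     ends := fun e => [set (if x == w then v else x) | x in ends G e];
     wt   := fun x => if x == v then (wt G v + wt G w)%R else wt G x |}.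

Definition admissible_lab G v w : Prop :=
  let m := mult G v w in
  exists l : nat, (l < m)%N /\
    (forall x, x \in vset G -> x != v -> x != w -> (3 <= deg G x)%N) /\
    (l%:Z + 1 <= wt G v)%R /\ (l%:Z + 2 <= wt G w)%R /\
    (3 <= (deg G v)%:Z - m%:Z + l%:Z)%R /\
    (3 <= (deg G w)%:Z - m%:Z + l%:Z)%R.

Definition admissible G v w : Prop :=
  adj G v w /\ (admissible_lab G v w \/ admissible_lab G w v).

Inductive contractible : mgraph T U -> Prop :=
| contr_single G : #|vset G| = 1%N -> contractible G
| contr_step G v w : admissible G v w -> contractible (contract G v w) ->
    contractible G.

End Defs.

(* Main.v *)
Require Import Defs.
From mathcomp Require Import all_boot all_order all_algebra zify.
Import Order.TTheory GRing.Theory Num.Theory.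
Set Implicit Arguments. Unset Strict Implicit. Unset Printing Implicit Defensive.

Section S.
Variables (T U : finType).
Implicit Types (G : mgraph T U) (x y z v w : T).

Definition inc G v := [set e in eset G | v \in ends G e].
Definition oth G v e := odflt v [pick z in ends G e :\ v].

Lemma set2_eq x y z : x != y -> x != z -> ([set x; y] == [set x; z]) = (y == z).
Proof.
move=> xy xz; apply/eqP/eqP=> [E|->//].
have : y \in [set x; z] by rewrite -E !inE eqxx orbT.
by rewrite !inE => /orP[/eqP yx|/eqP //]; rewrite yx eqxx in xy.
Qed.

Lemma ends2 G e x : wf G -> e \in eset G -> x \in ends G e ->
  exists z, z != x /\ ends G e = [set x; z].
Proof.
move=> W eE xe; have [_ c2] := W e eE.
have : #|ends G e :\ x| == 1 by move: c2; rewrite (cardsD1 x) xe add1n => -[->].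
case/cards1P=> z Ez; exists z; split.
  have : z \in ends G e :\ x by rewrite Ez set11.
  by rewrite !inE => /andP[].
by rewrite -Ez setD1K.
Qed.

Lemma oth_eq G e v y : wf G -> e \in eset G -> v \in ends G e -> y != v ->
  (ends G e == [set v; y]) = (oth G v e == y).
Proof.
move=> W eE ve yv; have [z [zv Ez]] := ends2 W eE ve.
have -> : oth G v e = z.
  rewrite /oth Ez setU1K ?inE 1?eq_sym //.
  by case: pickP => [t|/(_ z)]; rewrite !inE ?eqxx // => /eqP.
by rewrite Ez set2_eq // eq_sym.
Qed.

Lemma mult_fiber G v y : wf G -> y != v ->
  mult G v y = #|[set e in inc G v | oth G v e == y]|.
Proof.
move=> W yv; rewrite /mult; apply: eq_card => e; rewrite !inE.
case eE: (e \in eset G) => //=.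
case ve: (v \in ends G e); first by rewrite oth_eq.
by apply/negbTE/eqP=> E; rewrite E !inE eqxx in ve.
Qed.

Lemma mult_sym G x y : mult G x y = mult G y x.
Proof. by rewrite /mult setUC. Qed.

Lemma deg_bound G v (Y : {set T}) : wf G -> v \notin Y ->
  \sum_(y in Y) mult G v y + #|[set z in vset G | adj G v z & z \notin Y]| <= deg G v.
Proof.
move=> W vY.
have -> : deg G v = #|inc G v| by [].
rewrite -(cardsID [set e | oth G v e \in Y] (inc G v)); apply: leq_add.
  rewrite (eq_bigr (fun y => #|[set e in inc G v | oth G v e == y]|)); last first.
    by move=> y yY; apply: mult_fiber => //; apply: contraNneq vY => <-.
  rewrite -sum1_card (partition_big (oth G v) (mem Y)) /=; last first.
    by move=> e; rewrite !inE => /andP[].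
  apply: eq_leq; apply: eq_bigr => y yY; rewrite -sum1_card; apply: eq_bigl => e.
  by rewrite !inE; case: (oth G v e =P y) => [->|]; rewrite ?yY ?andbT ?andbF.
apply: leq_trans (leq_imset_card (oth G v) _); apply: subset_leq_card.
apply/subsetP=> z; rewrite inE => /and3P[zV /and4P[vV _ vz mz] zY].
have [e] : exists e, e \in [set e in eset G | ends G e == [set v; z]].
  by apply/set0Pn; rewrite -card_gt0.
rewrite inE => /andP[eE /eqP Ee].
have ve : v \in ends G e by rewrite Ee !inE eqxx.
have oe : oth G v e = z by apply/eqP; rewrite -(oth_eq W eE ve) ?Ee // eq_sym.
apply/imsetP; exists e; last by [].
by rewrite !inE eE ve /= oe zY.
Qed.

Lemma nbr_bound G v (Y : {set T}) :
  rdeg G v <= #|[set z in vset G | adj G v z & z \notin Y]| + #|Y|.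
Proof.
apply: leq_trans (leq_card_setU _ _); apply: subset_leq_card.
apply/subsetP=> z; rewrite !inE => /andP[-> ->]; by case: (z \in Y).
Qed.


Definition ren v w x := if x == w then v else x.

Lemma ends_c G v w e : ends (contract G v w) e = ren v w @: ends G e.
Proof. by []. Qed.
Lemma eset_c G v w : eset (contract G v w) = [set e in eset G | ends G e != [set v; w]].
Proof. by []. Qed.
Lemma vset_c G v w : vset (contract G v w) = vset G :\ w.
Proof. by []. Qed.
Lemma wt_c G v w x : wt (contract G v w) x = if x == v then (wt G v + wt G w)%R else wt G x.
Proof. by []. Qed.

Lemma mem_ren v w x (S : {set T}) : x != v -> x != w -> (x \in ren v w @: S) = (x \in S).
Proof.
move=> xv xw; apply/imsetP/idP => [[z zS xE]|xS]; last by exists x; rewrite // /ren (negbTE xw).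
by move: xv xw; rewrite xE /ren; case: (z =P w) => [_|_ _ _ //]; rewrite eqxx.
Qed.

Lemma ren_id v w (S : {set T}) : w \notin S -> ren v w @: S = S.
Proof.
move=> wS; apply/setP=> x; apply/imsetP/idP => [[z zS ->]|xS]; last first.
  by exists x; rewrite // /ren; case: eqP => // xw; rewrite -xw xS in wS.
by rewrite /ren; case: eqP => // zw; rewrite -zw zS in wS.
Qed.

Lemma mem_ren_v v w (S : {set T}) : (v \in ren v w @: S) = (v \in S) || (w \in S).
Proof.
apply/imsetP/idP => [[z zS]|].
  by rewrite /ren; case: eqP => [<- _|_ ->]; rewrite zS ?orbT.
case/orP=> [vS|wS]; [exists v => //| exists w => //]; rewrite /ren ?eqxx //.
by case: eqP.
Qed.

Lemma deg_c_other G v w x : x != v -> x != w -> deg (contract G v w) x = deg G x.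
Proof.
move=> xv xw; rewrite /deg; apply: eq_card => e; rewrite !inE ends_c mem_ren //.
case: (e \in eset G) => //=; case xe: (x \in ends G e); rewrite ?andbF ?andbT //.
by apply/eqP=> E; move: xe; rewrite E !inE (negbTE xv) (negbTE xw).
Qed.

Lemma mult_c_other G v w x y : x != v -> x != w -> y != v -> y != w ->
  mult (contract G v w) x y = mult G x y.
Proof.
move=> xv xw yv yw; rewrite /mult; apply: eq_card => e; rewrite !inE ends_c.
case: (e \in eset G) => //=.
have wxy : w \notin [set x; y] by rewrite !inE !(eq_sym w) negb_or xw yw.
apply/andP/eqP => [[_ /eqP E]|E].
  have wS : w \notin ends G e.
    apply/negP=> wS; have : v \in ren v w @: ends G e by rewrite mem_ren_v wS orbT.
    by rewrite E !inE !(eq_sym v) (negbTE xv) (negbTE yv).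
  by rewrite -E ren_id.
rewrite E ren_id //; split=> //; apply/eqP=> E2.
have : x \in [set v; w] by rewrite -E2 !inE eqxx.
by rewrite !inE (negbTE xv) (negbTE xw).
Qed.

Lemma set2C x y : [set x; y] = [set y; x].
Proof. by rewrite setUC. Qed.

Lemma mult_c_v G v w x : wf G -> v != w -> x != v -> x != w ->
  mult (contract G v w) v x = mult G v x + mult G w x.
Proof.
move=> W vw xv xw; rewrite /mult.
set A := [set e in eset G | ends G e == [set v; x]].
set B := [set e in eset G | ends G e == [set w; x]].
have dAB : A :&: B = set0.
  apply/setP=> e; rewrite !inE; apply/negbTE/negP=> /andP[/andP[_ /eqP E1] /andP[_ /eqP E2]].
  have : w \in [set v; x] by rewrite -E1 E2 !inE eqxx.
  by rewrite !inE eq_sym (negbTE vw) /= eq_sym (negbTE xw).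
rewrite -cardsUI dAB cards0 addn0.
apply: eq_card => e; rewrite !inE ends_c.
case eE: (e \in eset G) => //=.
apply/andP/orP => [[nvw /eqP E]|[/eqP E|/eqP E]].
- have xe : x \in ends G e by rewrite -(mem_ren (ends G e) xv xw) E !inE eqxx orbT.
  have [z [zx Ez]] := ends2 W eE xe.
  have : ren v w z \in ren v w @: ends G e by apply: imset_f; rewrite Ez !inE eqxx orbT.
  rewrite E !inE /ren; case: (z =P w) => [zw|nzw].
    by move=> _; right; rewrite Ez zw set2C.
  rewrite (negbTE zx) orbF => /eqP zv; left; by rewrite Ez zv set2C.
- have vx : v != x by rewrite eq_sym.
  rewrite E ren_id; last by rewrite !inE !(eq_sym w) negb_or vw xw.
  by rewrite set2_eq // xw eqxx.
- split.
    apply/eqP=> E2; have : x \in [set v; w] by rewrite -E2 E !inE eqxx orbT.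
    by rewrite !inE (negbTE xv) (negbTE xw).
  by rewrite E imsetU1 imset_set1 /ren eqxx (negbTE xw).
Qed.

Lemma deg_c_v G v w : wf G -> v != w ->
  deg (contract G v w) v + 2 * mult G v w = deg G v + deg G w.
Proof.
move=> W vw.
have Iv : deg G v = #|inc G v| by []. have Iw : deg G w = #|inc G w| by [].
set M := [set e in eset G | ends G e == [set v; w]].
have IM : inc G v :&: inc G w = M.
  apply/setP=> e; rewrite !inE; case eE: (e \in eset G) => //=.
  apply/idP/eqP => [/andP[ve we]|->]; last by rewrite !inE !eqxx orbT.
  have [z [zv Ez]] := ends2 W eE ve; move: we; rewrite Ez !inE eq_sym (negbTE vw) /=.
  by move/eqP=> ->.
have MU : M \subset inc G v :|: inc G w by rewrite -IM subIset // subsetUl.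
have -> : deg (contract G v w) v = #|(inc G v :|: inc G w) :\: M|.
  rewrite /deg; apply: eq_card => e; rewrite !inE ends_c mem_ren_v.
  by case: (e \in eset G); rewrite ?andbF //= andbC.
rewrite Iv Iw -cardsUI IM -(cardsID M (inc G v :|: inc G w)).
rewrite (setIidPr MU); have -> : mult G v w = #|M| by []; lia.
Qed.

Lemma wf_c G v w : wf G -> v != w -> v \in vset G -> wf (contract G v w).
Proof.
move=> W vw vV e; rewrite eset_c ends_c vset_c inE => /andP[eE nvw].
have [sub c2] := W e eE.
case wS: (w \in ends G e); last first.
  rewrite ren_id ?wS // c2; split=> //; apply/subsetP=> x xS.
  by rewrite !inE (subsetP sub x xS) andbT; apply: contraTneq xS => ->; rewrite wS.
have [z [zw Ez]] := ends2 W eE wS.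
have zv : z != v by apply: contraNneq nvw => zv; rewrite Ez zv set2C.
have zV : z \in vset G by apply: (subsetP sub); rewrite Ez !inE eqxx orbT.
rewrite Ez imsetU1 imset_set1 /ren eqxx (negbTE zw) cards2 eq_sym zv; split=> //.
apply/subsetP=> x; rewrite !inE => /orP[]/eqP->; rewrite ?vV ?zV ?zw ?andbT // eq_sym.
Qed.


Lemma deg3 G v y1 y2 y3 : wf G -> v != y1 -> v != y2 -> v != y3 ->
  y1 != y2 -> y1 != y3 -> y2 != y3 ->
  mult G v y1 + mult G v y2 + mult G v y3 <= deg G v.
Proof.
move=> W v1 v2 v3 n12 n13 n23.
have vY : v \notin y1 |: (y2 |: [set y3]) by rewrite !inE !negb_or v1 v2 v3.
have := deg_bound W vY.
rewrite !big_setU1 ?big_set1 ?inE ?negb_or ?n12 ?n13 ?n23 // => /= H; lia.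
Qed.

Lemma deg2 G v y1 y2 : wf G -> 4 <= rdeg G v -> v != y1 -> v != y2 -> y1 != y2 ->
  mult G v y1 + mult G v y2 + 2 <= deg G v.
Proof.
move=> W r v1 v2 n12.
have vY : v \notin y1 |: [set y2] by rewrite !inE !negb_or v1 v2.
have := deg_bound W vY.
rewrite !big_setU1 ?big_set1 ?inE ?negb_or ?n12 //= => H.
have := nbr_bound G v (y1 |: [set y2]); rewrite cards2 n12; lia.
Qed.

Lemma deg1 G v y : wf G -> 4 <= rdeg G v -> v != y -> mult G v y + 3 <= deg G v.
Proof.
move=> W r vy.
have vY : v \notin [set y] by rewrite inE.
have := deg_bound W vY; rewrite big_set1.
have := nbr_bound G v [set y]; rewrite cards1; lia.
Qed.

Lemma deg1' G v y : wf G -> v != y -> mult G v y <= deg G v.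
Proof.
move=> W vy; have vY : v \notin [set y] by rewrite inE.
have := deg_bound W vY; rewrite big_set1; lia.
Qed.

Lemma deg0 G v : wf G -> rdeg G v <= deg G v.
Proof.
move=> W; have vY : v \notin set0 by rewrite inE.
have := deg_bound W vY; rewrite big_set0.
have := nbr_bound G v set0; rewrite cards0; lia.
Qed.

Lemma cm_or G y a b : complete_multipartite G -> y \in vset G -> a \in vset G -> b \in vset G ->
  adj G a b -> 0 < mult G y a + mult G y b.
Proof.
move=> cm yV aV bV ab.
case ya: (adj G y a); first by move: ya => /and4P[_ _ _]; rewrite addn_gt0 => ->.
case yb: (adj G y b); first by move: yb => /and4P[_ _ _]; rewrite addn_gt0 orbC => ->.
by case: (cm y a b yV aV bV); rewrite ya yb.
Qed.

Record Inv G h1 h2 : Prop := {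
 i_wf : wf G; i_ne : h1 != h2; i_h1 : h1 \in vset G; i_h2 : h2 \in vset G;
 i_w1 : (4 <= wt G h1)%R; i_w2 : (4 <= wt G h2)%R;
 i_ws : (13 <= wt G h1 + wt G h2 + (2 * #|vset G|)%:Z)%R;
 i_m2 : 2 <= mult G h1 h2; i_m6 : 6 <= mult G h1 h2 + #|vset G|;
 i_light : forall y, y \in vset G -> y != h1 -> y != h2 ->
   [/\ (2 <= wt G y)%R, 4 <= deg G y, 0 < mult G y h1, 0 < mult G y h2 &
       (3 + mult G h1 y <= deg G h1) /\ (3 + mult G h2 y <= deg G h2)] }.

Lemma Inv_sym G h1 h2 : Inv G h1 h2 -> Inv G h2 h1.
Proof.
case=> W ne V1 V2 w1 w2 ws m2 m6 L; constructor; rewrite ?(eq_sym h2) ?(mult_sym G h2 h1) //; try lia.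
move=> y yV y2 y1; have [? ? ? ? [? ?]] := L y yV y1 y2; split => //.
Qed.


End S.

Section S.
Variables (T U : finType).
Implicit Types (G : mgraph T U) (x y z v w : T).

Lemma absorb G h h' x : Inv G h h' -> x \in vset G -> x != h -> x != h' ->
  mult G x h <= mult G x h' ->
  admissible G h x /\ Inv (contract G h x) h h'.
Proof.
case=> W ne hV h'V w1 w2 ws m2 m6 L xV xh xh' le.
have [wx dx mxh mxh' [dhx dh'x]] := L x xV xh xh'.
have hx : h != x by rewrite eq_sym.
have h'x : h' != x by rewrite eq_sym.
have h'h : h' != h by rewrite eq_sym.
have d2x : mult G x h + mult G x h' <= deg G x.
  have vY : x \notin h |: [set h'] by rewrite !inE negb_or xh xh'.
  have := deg_bound W vY; rewrite big_setU1 ?big_set1 ?inE ?ne //= => H; lia.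
have mhx : mult G h x = mult G x h by rewrite mult_sym.
split.
  split; first by rewrite /adj hV xV hx mhx.
  right; exists (if 2 <= mult G x h then 1 else 0)%N.
  split.
    by case: ifP => H; clear -H mxh; lia.
  split.
    move=> z zV zx zh; case: (z =P h') => [->|/eqP zh']; first by clear -dh'x; lia.
    by have [_ dz _ _ _] := L z zV zh zh'; clear -dz; lia.
  rewrite mhx in dhx.
  by case: ifP => H; clear -H dhx d2x le mxh wx w1 dx; (split; [lia|split; [lia|split; lia]]).
have xV0 : (0 < #|vset G|)%N by apply/card_gt0P; exists x.
have cV : #|vset (contract G h x)| = #|vset G| - 1.
  by rewrite vset_c (cardsD1 x (vset G)) xV; clear; lia.
have mhh' : mult (contract G h x) h h' = mult G h h' + mult G x h'.
  by rewrite mult_c_v.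
constructor.
- exact: wf_c.
- exact: ne.
- by rewrite vset_c !inE hx.
- by rewrite vset_c !inE h'x.
- by rewrite wt_c eqxx; clear -w1 wx; lia.
- by rewrite wt_c (negbTE h'h).
- rewrite wt_c eqxx wt_c (negbTE h'h) cV; clear -ws xV0 wx; lia.
- rewrite mhh'; clear -m2; lia.
- rewrite mhh' cV; clear -m6 mxh' xV0; lia.
move=> y; rewrite vset_c !inE => /andP[yx yV] yh yh'.
have [wy dy myh myh' [dhy dh'y]] := L y yV yh yh'.
have hy : h != y by rewrite eq_sym.
have xy : x != y by rewrite eq_sym.
rewrite wt_c (negbTE yh) (@deg_c_other _ _ G h x y yh yx) (mult_sym _ y h) mult_c_v //.
rewrite (@mult_c_other _ _ G h x y h' yh yx h'h h'x).
rewrite (@mult_c_other _ _ G h x h' y h'h h'x yh yx).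
rewrite (@deg_c_other _ _ G h x h' h'h h'x).
split=> //; first by rewrite (mult_sym G y h) in myh; clear -myh; lia.
split=> //.
have := deg_c_v W hx.
have := deg3 W hx hy ne xy xh' yh'.
have := deg3 W xh xy xh' hy ne yh'.
rewrite (mult_sym G x y) mhx; clear -m2 mxh' dhy; lia.
Qed.


Lemma final G h1 h2 : Inv G h1 h2 -> (forall y, y \in vset G -> (y == h1) || (y == h2)) ->
  contractible G.
Proof.
case=> W ne V1 V2 w1 w2 ws m2 m6 L all2.
have cV : (#|vset G| <= 2)%N.
  have <- : #|[set h1; h2]| = 2 by rewrite cards2 ne.
  apply: subset_leq_card; apply/subsetP=> y /all2.
  by rewrite !inE.
have n21 : h2 != h1 by rewrite eq_sym.
have d1 := deg1' W ne.
have d2 := deg1' W n21; rewrite mult_sym in d2.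
have noth : forall z, z \in vset G -> z != h1 -> z != h2 -> (3 <= deg G z)%N.
  by move=> z /all2 /orP[]/eqP->; rewrite eqxx.
apply: (@contr_step _ _ G h1 h2).
  split; first by rewrite /adj V1 V2 ne; clear -m2; lia.
  case: (boolP (5 <= wt G h2)%R) => H.
    left; exists 3%N; split; first by clear -m6 cV; lia.
    split; first exact: noth.
    by clear -w1 H d1 d2; (split; [lia|split; [lia|split; lia]]).
  right; exists 3%N; split; first by rewrite mult_sym; clear -m6 cV; lia.
  split; first by move=> z zV z2 z1; exact: noth.
  rewrite mult_sym.
  by clear -w1 w2 ws cV H d1 d2; (split; [lia|split; [lia|split; lia]]).
apply: contr_single; rewrite vset_c.
have -> : vset G :\ h2 = [set h1].
  apply/setP=> y; rewrite !inE; apply/andP/eqP => [[y2 /all2]|->]; last by rewrite V1 ne.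
  by rewrite (negbTE y2) orbF => /eqP.
exact: cards1.
Qed.

Lemma hub n : forall G h1 h2, #|vset G| = n -> Inv G h1 h2 -> contractible G.
Proof.
elim: n => [|n IH] G h1 h2 Hn I.
  by move: (i_h1 I); rewrite (cards0_eq Hn) inE.
case: (pickP (fun y => [&& y \in vset G, y != h1 & y != h2])) => [x /and3P[xV x1 x2]|none].
  have H : forall G h h', Inv G h h' -> #|vset G| = n.+1 -> x \in vset G -> x != h -> x != h' ->
      mult G x h <= mult G x h' -> contractible G.
    move=> G0 h h' I0 Hn0 xV0 xh xh' le.
    have [ad I'] := absorb I0 xV0 xh xh' le.
    apply: contr_step ad _; apply: IH I'.
    by rewrite vset_c; move: Hn0; rewrite (cardsD1 x (vset G0)) xV0 add1n => -[].
  case: (leqP (mult G x h1) (mult G x h2)) => le.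
    exact: H I Hn xV x1 x2 le.
  exact: H (Inv_sym I) Hn xV x2 x1 (ltnW le).
apply: (final I) => y yV; move: (none y); rewrite yV /=.
by case: (y == h1); case: (y == h2).
Qed.

End S.

Unset Implicit Arguments.

Theorem lemma3p8 (T U : finType) (G : mgraph T U) :
  wf G ->
  vset G != set0 ->
  complete_multipartite G ->
  (forall v, v \in vset G -> (4 <= rdeg G v)%N /\ (2 <= wt G v)%R) ->
  contractible G.
Proof.
move=> W ne cm H.
have Nsub : forall v, [set z in vset G | adj G v z] \subset vset G :\ v.
  move=> v; apply/subsetP=> z; rewrite !inE => /andP[zV /and4P[_ _ vz _]].
  by rewrite zV eq_sym vz.
have cardD : forall (A B : {set T}), (#|A| <= #|A :\: B| + #|B|)%N.
  move=> A B; have := cardsID B A; have := subset_leq_card (subsetIr A B); lia.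
have [a aV] := set0Pn _ ne.
have [ra wa] := H a aV.
have cV1 : forall v, v \in vset G -> #|vset G :\ v| = (#|vset G| - 1)%N.
  by move=> v vV; rewrite (cardsD1 v (vset G)) vV; lia.
have n5 : (5 <= #|vset G|)%N.
  have := subset_leq_card (Nsub a); rewrite cV1 //; move: ra; rewrite /rdeg; lia.
have [b] : exists b, b \in [set z in vset G | adj G a z].
  by apply/set0Pn; rewrite -card_gt0; move: ra; rewrite /rdeg; lia.
rewrite inE => /andP[bV ab].
have [c] : exists c, c \in [set z in vset G | adj G a z] :\ b.
  apply/set0Pn; rewrite -card_gt0; have := cardD [set z in vset G | adj G a z] [set b].
  by rewrite cards1; move: ra; rewrite /rdeg; lia.
rewrite !inE => /and3P[cb cV ac].
have [rc wc] := H c cV.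
have [d] : exists d, d \in [set z in vset G | adj G c z] :\: [set a; b].
  apply/set0Pn; rewrite -card_gt0; have := cardD [set z in vset G | adj G c z] [set a; b].
  have := cards2 a b; move: rc; rewrite /rdeg; case: (a != b); lia.
rewrite !inE negb_or => /and3P[/andP[da db] dV cd].
have [rb wb] := H b bV.
have [rd wd] := H d dV.
move: (ab) (ac) (cd) => /and4P[_ _ nab mab] /and4P[_ _ nac mac] /and4P[_ _ ncd mcd].
have ba : b != a by rewrite eq_sym.
have ca : c != a by rewrite eq_sym.
have dc : d != c by rewrite eq_sym.
have bc : b != c by rewrite eq_sym.
have dall : forall v, v \in vset G -> (4 <= deg G v)%N.
  by move=> v vV; have [r _] := H v vV; have := deg0 v W; clear -r; lia.
have da1 := deg1 W ra nab.
have db1 := deg1 W rb ba.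
have dc1 := deg1 W rc ncd.
have dd1 := deg1 W rd dc.
rewrite (mult_sym G b a) in db1.
rewrite (mult_sym G d c) in dd1.
have adm1 : admissible G a b.
  split => //; left; exists 0%N; split; first by [].
  split; first by move=> z zV _ _; have := dall z zV; clear; lia.
  by clear -wa wb da1 db1; (split; [lia|split; [lia|split; lia]]).
set G1 := contract G a b.
have W1 : wf G1 by apply: wf_c.
have m1cd : mult G1 c d = mult G c d by apply: mult_c_other.
have deg1c : deg G1 c = deg G c by apply: deg_c_other.
have deg1d : deg G1 d = deg G d by apply: deg_c_other.
have deg1a : (deg G1 a + 2 * mult G a b = deg G a + deg G b)%N by apply: deg_c_v.
have cVG1 : c \in vset G1 by rewrite vset_c !inE cb cV.
have dV1 : d \in vset G1 by rewrite vset_c !inE db dV.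
have adm2 : admissible G1 c d.
  split; first by rewrite /adj cVG1 dV1 ncd m1cd mcd.
  left; exists 0%N; split; first by rewrite m1cd.
  split.
    move=> z; rewrite vset_c !inE => /andP[zb zV] zc zd.
    case: (z =P a) => [->|/eqP za]; first by clear -deg1a da1 db1; lia.
    by rewrite deg_c_other //; have := dall z zV; clear; lia.
  rewrite deg1c deg1d m1cd /G1 !wt_c (negbTE ca) (negbTE da).
  by clear -wc wd dc1 dd1; (split; [lia|split; [lia|split; lia]]).
set G2 := contract G1 c d.
have W2 : wf G2 by apply: wf_c.
apply: (contr_step adm1); apply: (contr_step adm2).
apply: (@hub _ _ #|vset G2| G2 a c erefl).
have ad : a != d by rewrite eq_sym.
have cV2 : #|vset G2| = (#|vset G| - 2)%N.
  have h1 := cardsD1 d (vset G1); rewrite dV1 in h1.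
  have h2 := cardsD1 b (vset G); rewrite bV in h2.
  rewrite /G2 vset_c; move: h1 h2; rewrite /G1 vset_c; clear; lia.
have aV2 : a \in vset G2 by rewrite /G2 /G1 !vset_c !inE ad nab aV.
have cV2' : c \in vset G2 by rewrite /G2 vset_c in_setD1 ncd /=; exact: cVG1.
have m1ac : mult G1 a c = (mult G a c + mult G b c)%N by apply: mult_c_v.
have m1ad : mult G1 a d = (mult G a d + mult G b d)%N by apply: mult_c_v.
have m2ac : mult G2 a c = (mult G1 a c + mult G1 a d)%N.
  by rewrite mult_sym mult_c_v // (mult_sym G1 c a) (mult_sym G1 d a).
have dab := cm_or cm dV aV bV ab.
rewrite (mult_sym G d a) (mult_sym G d b) in dab.
constructor => //.
- by rewrite /G2 wt_c (negbTE nac) wt_c eqxx; clear -wa wb; lia.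
- by rewrite /G2 wt_c eqxx /G1 !wt_c (negbTE ca) (negbTE da); clear -wc wd; lia.
- rewrite /G2 wt_c (negbTE nac) wt_c eqxx /G1 !wt_c (negbTE ca) (negbTE da) eqxx.
  rewrite -/G1 -/G2 cV2; clear -wa wb wc wd n5; lia.
- rewrite m2ac m1ac m1ad; clear -mac dab; lia.
- rewrite cV2 m2ac m1ac m1ad.
  case: (leqP 6 #|vset G|) => n6; first by clear -mac dab n6; lia.
  have : [set z in vset G | adj G c z] == vset G :\ c.
    by rewrite eqEcard Nsub cV1 //; move: rc; rewrite /rdeg; clear -n6; lia.
  move/eqP => E; have : b \in vset G :\ c by rewrite !inE bc bV.
  rewrite -E inE => /andP[_ /and4P[_ _ _ mcb]]; rewrite mult_sym in mcb.
  clear -mac dab mcb n5; lia.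
move=> y yV2 ya yc.
move: (yV2); rewrite /G2 vset_c /G1 vset_c !inE => /and3P[yd yb yV].
rewrite -/G1 -/G2.
have [ry wy] := H y yV.
have ay : a != y by rewrite eq_sym.
have by_ : b != y by rewrite eq_sym.
have cy : c != y by rewrite eq_sym.
have dy : d != y by rewrite eq_sym.
have m1ay : mult G1 a y = (mult G a y + mult G b y)%N by apply: mult_c_v.
have m2ay : mult G2 a y = mult G1 a y by apply: mult_c_other.
have m1cy : mult G1 c y = mult G c y by apply: mult_c_other.
have m1dy : mult G1 d y = mult G d y by apply: mult_c_other.
have m2cy : mult G2 c y = (mult G1 c y + mult G1 d y)%N by apply: mult_c_v.
have yab := cm_or cm yV aV bV ab.
have ycd := cm_or cm yV cV dV cd.
rewrite (mult_sym G y a) (mult_sym G y b) in yab.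
rewrite (mult_sym G y c) (mult_sym G y d) in ycd.
split.
- by rewrite /G2 wt_c (negbTE yc) /G1 wt_c (negbTE ya).
  have e2 : deg G2 y = deg G1 y by apply: deg_c_other.
  have e1 : deg G1 y = deg G y by apply: deg_c_other.
  by rewrite e2 e1; apply: dall.
- by rewrite mult_sym m2ay m1ay.
- by rewrite mult_sym m2cy m1cy m1dy.
have deg2a : deg G2 a = deg G1 a by apply: deg_c_other.
have deg2c : (deg G2 c + 2 * mult G1 c d = deg G1 c + deg G1 d)%N by apply: deg_c_v.
have := deg2 W ra nab ay by_.
have := deg2 W rb ba by_ ay.
have := deg2 W rc ncd cy dy.
have := deg2 W rd dc dy cy.
rewrite (mult_sym G b a) (mult_sym G d c).
rewrite m2ay m1ay m2cy m1cy m1dy deg2a m1cd in deg2c *.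
rewrite deg1c deg1d in deg2c.
move=> h1 h2 h3 h4; split; clear -deg1a deg2c h1 h2 h3 h4; lia.
Qed.
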